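(* Let $A>0$ and assume $\lambda_0:=A-1>0$. Fix $0<\mu_0<\lambda_0$ and $a$ with $\mu_0+1<a<\lambda_0+1$. Let $\theta\in C_b(\mathbb{R})$. Then there is $\varepsilon_0>0$ such that for any $|\varepsilon|<\varepsilon_0$ the following holds: any global nonnegative solution $u=u^\varepsilon(t,x,y)$ of $$\partial_t u=\partial_{xx}u+\partial_{yy}u+u\left(1-A^2\big(y-\varepsilon\theta(x)\big)^2-\int_{\mathbb{R}}u(t,x,y')\,dy'\right),\quad t>0,\ x,y\in\mathbb{R},$$ starting from an initial datum $u_0=u_0(x,y)$ such that $$M=M(u_0):=\sup_{(x,y)\in\mathbb{R}^2}u_0(x,y)e^{\frac12 a y^2}<+\infty,$$ satisfies $$0\le u(t,x,y)\le Me^{-\mu_0 t}e^{-\frac12 a y^2}\quad\text{for all } t\ge 0,\ x\in\mathbb{R},\ y\in\mathbb{R}.$$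
   Context: $C_b(\mathbb{R})$ denotes the bounded continuous functions on $\mathbb{R}$. The number $\lambda_0=A-1$ is the principal eigenvalue of $-\frac{d^2}{dy^2}-(1-A^2y^2)$ on $L^2(\mathbb{R})$. *)

(* Defs.v *)
From Stdlib Require Import Reals.
From Coquelicot Require Import Coquelicot.
Open Scope R_scope.

Definition Cb (theta : R -> R) : Prop :=
  (forall x, continuous theta x) /\ (exists C, forall x, Rabs (theta x) <= C).

Definition y_mass (u : R -> R -> R -> R) (t x : R) : R :=
  RInt_gen (fun y' => u t x y') (Rbar_locally m_infty) (Rbar_locally p_infty).

Definition d2x (u : R -> R -> R -> R) (t x y : R) : R :=
  Derive (fun x' => Derive (fun x'' => u t x'' y) x') x.
Definition d2y (u : R -> R -> R -> R) (t x y : R) : R :=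
  Derive (fun y' => Derive (fun y'' => u t x y'') y') y.
Definition dt (u : R -> R -> R -> R) (t x y : R) : R :=
  Derive (fun s => u s x y) t.

Definition is_global_nonneg_solution (A eps : R) (theta : R -> R)
    (u0 : R -> R -> R) (u : R -> R -> R -> R) : Prop :=
  (forall t x y, 0 <= t ->
     filterlim (fun p : R * R * R => u (fst (fst p)) (snd (fst p)) (snd p))
       (within (fun p : R * R * R => 0 <= fst (fst p)) (locally (t, x, y)))
       (locally (u t x y))) /\
  (forall t x y, 0 < t ->
     ex_derive (fun s => u s x y) t /\
     (forall x', ex_derive (fun x'' => u t x'' y) x') /\
     ex_derive (fun x' => Derive (fun x'' => u t x'' y) x') x /\
     (forall y', ex_derive (fun y'' => u t x y'') y') /\
     ex_derive (fun y' => Derive (fun y'' => u t x y'') y') y) /\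
  (forall t x, 0 <= t ->
     ex_RInt_gen (fun y' => u t x y') (Rbar_locally m_infty) (Rbar_locally p_infty)) /\
  (forall t x y, 0 < t ->
     dt u t x y = d2x u t x y + d2y u t x y
       + u t x y * (1 - A ^ 2 * (y - eps * theta x) ^ 2 - y_mass u t x)) /\
  (forall x y, u 0 x y = u0 x y) /\
  (forall t x y, 0 <= t -> 0 <= u t x y) /\
  (forall T, 0 <= T -> exists C, forall t x y, 0 <= t <= T -> Rabs (u t x y) <= C).

Definition M_of (a : R) (u0 : R -> R -> R) : Rbar :=
  Lub_Rbar (fun z => exists x y, z = u0 x y * exp (a * y ^ 2 / 2)).

(* Main.v *)
Require Import Defs.
From Stdlib Require Import Reals Lra Lia ClassicalEpsilon Classical.
From Coquelicot Require Import Coquelicot.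
Open Scope R_scope.

Lemma inv_n_lim : is_lim_seq (fun n => / (INR n + 1)) 0.
Proof.
  apply is_lim_seq_Reals. intros eps Heps.
  destruct (archimed (/ eps)) as [H1 _].
  destruct (INR_unbounded (IZR (up (/eps)))) as [N HN].
  exists N. intros n Hn. unfold Rdist. rewrite Rminus_0_r.
  assert (INR N <= INR n) by (apply le_INR; lia).
  assert (0 < /eps) by (apply Rinv_0_lt_compat; lra).
  rewrite Rabs_pos_eq by (left; apply Rinv_0_lt_compat; pose proof (pos_INR n); lra).
  assert (/eps < INR n + 1) by lra.
  rewrite <- (Rinv_inv eps).
  apply Rinv_lt_contravar; [| lra].
  apply Rmult_lt_0_compat; lra.
Qed.

Lemma incr_mono (phi : nat -> nat) : (forall n, (phi n < phi (S n))%nat) ->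
  forall n m, (n <= m)%nat -> (phi n <= phi m)%nat.
Proof.
  intros H n m Hnm. induction Hnm. lia. specialize (H m). lia.
Qed.

Lemma BW_sub (u : nat -> R) a b : (forall n, a <= u n <= b) ->
  exists (phi : nat -> nat) (l : R), (forall n, (phi n < phi (S n))%nat) /\
    is_lim_seq (fun n => u (phi n)) l /\ a <= l <= b.
Proof.
  intros Hab.
  destruct (Bolzano_Weierstrass u (fun c => a <= c <= b) (compact_P3 a b) Hab) as [l Hl].
  assert (Hlab : a <= l <= b).
  { split; apply Rnot_lt_le; intro Hc.
    + destruct (Hl (fun x => Rabs (x - l) < a - l) O) as [p [_ Hp]].
      * assert (Hpos : 0 < a - l) by lra. exists (mkposreal _ Hpos). intros y Hy; exact Hy.
      * specialize (Hab p). cbv beta in Hp. destruct (Rabs_def2 _ _ Hp). lra.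
    + destruct (Hl (fun x => Rabs (x - l) < l - b) O) as [p [_ Hp]].
      * assert (Hpos : 0 < l - b) by lra. exists (mkposreal _ Hpos). intros y Hy; exact Hy.
      * specialize (Hab p). cbv beta in Hp. destruct (Rabs_def2 _ _ Hp). lra. }
  assert (Hk : forall N k, exists p, (N <= p)%nat /\ Rabs (u p - l) < / (INR k + 1)).
  { intros N k.
    assert (Hpos : 0 < / (INR k + 1)) by (apply Rinv_0_lt_compat; pose proof (pos_INR k); lra).
    destruct (Hl (fun x => Rabs (x - l) < / (INR k + 1)) N) as [p Hp].
    - exists (mkposreal _ Hpos). intros y Hy. exact Hy.
    - exists p; exact Hp. }
  pose (f := fun N k => proj1_sig (constructive_indefinite_description _ (Hk N k))).
  assert (Hf : forall N k, (N <= f N k)%nat /\ Rabs (u (f N k) - l) < / (INR k + 1)).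
  { intros N k. unfold f. destruct (constructive_indefinite_description _ (Hk N k)); auto. }
  pose (phi := fix phi n := match n with O => f O O | S m => f (S (phi m)) (S m) end).
  exists phi, l.
  assert (Hphi : forall n, Rabs (u (phi n) - l) < / (INR n + 1)).
  { intros [|n]; simpl; apply Hf. }
  split; [| split].
  - intros n. simpl. destruct (Hf (S (phi n)) (S n)). lia.
  - apply is_lim_seq_Reals. intros eps Heps.
    pose proof inv_n_lim as Hi. apply is_lim_seq_Reals in Hi. destruct (Hi eps Heps) as [N HN].
    exists N. intros n Hn. specialize (HN n Hn). unfold Rdist in *.
    rewrite Rminus_0_r in HN. specialize (Hphi n).
    eapply Rlt_le_trans; [exact Hphi|]. eapply Rle_trans; [apply Rle_abs| left; exact HN].
  - exact Hlab.
Qed.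

Definition inbox (T L t x y : R) := 0 <= t <= T /\ -L <= x <= L /\ -L <= y <= L.

Lemma EVT3 (g : R -> R -> R -> R) (T L : R) :
  0 <= T -> 0 <= L ->
  (exists B, forall t x y, inbox T L t x y -> g t x y <= B) ->
  (forall (tn xn yn : nat -> R) t x y, (forall n, inbox T L (tn n) (xn n) (yn n)) ->
     inbox T L t x y -> is_lim_seq tn t -> is_lim_seq xn x -> is_lim_seq yn y ->
     is_lim_seq (fun n => g (tn n) (xn n) (yn n)) (g t x y)) ->
  exists t0 x0 y0, inbox T L t0 x0 y0 /\
    forall t x y, inbox T L t x y -> g t x y <= g t0 x0 y0.
Proof.
  intros HT HL [B HB] Hc.
  pose (E := fun z => exists t x y, inbox T L t x y /\ z = g t x y).
  destruct (completeness E) as [Sg [HS1 HS2]].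
  { exists B. intros z [t [x [y [H ->]]]]. auto. }
  { exists (g 0 0 0), 0, 0, 0. split; [unfold inbox; lra| reflexivity]. }
  assert (Hn : forall n : nat, exists p : R * R * R,
     inbox T L (fst (fst p)) (snd (fst p)) (snd p) /\
     Sg - / (INR n + 1) < g (fst (fst p)) (snd (fst p)) (snd p)).
  { intros n. apply NNPP. intro Hno.
    assert (Hpos : 0 < / (INR n + 1)) by (apply Rinv_0_lt_compat; pose proof (pos_INR n); lra).
    assert (Sg <= Sg - / (INR n + 1)).
    { apply HS2. intros z [t [x [y [H ->]]]]. apply Rnot_lt_le. intro Hlt.
      apply Hno. exists (t, x, y). simpl. auto. }
    lra. }
  pose (p := fun n => proj1_sig (constructive_indefinite_description _ (Hn n))).
  assert (Hp : forall n, inbox T L (fst (fst (p n))) (snd (fst (p n))) (snd (p n)) /\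
     Sg - / (INR n + 1) < g (fst (fst (p n))) (snd (fst (p n))) (snd (p n))).
  { intros n. unfold p. destruct (constructive_indefinite_description _ (Hn n)). auto. }
  clearbody p.
  destruct (BW_sub (fun n => fst (fst (p n))) 0 T) as [phi1 [t0 [Hi1 [Hl1 Hb1]]]].
  { intros n. apply Hp. }
  destruct (BW_sub (fun n => snd (fst (p (phi1 n)))) (-L) L) as [phi2 [x0 [Hi2 [Hl2 Hb2]]]].
  { intros n. apply Hp. }
  destruct (BW_sub (fun n => snd (p (phi1 (phi2 n)))) (-L) L) as [phi3 [y0 [Hi3 [Hl3 Hb3]]]].
  { intros n. apply Hp. }
  assert (Hb : inbox T L t0 x0 y0) by (unfold inbox; auto).
  exists t0, x0, y0. split; [exact Hb|].
  assert (Hinc : forall (f : nat -> nat), (forall n, (f n < f (S n))%nat) ->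
     filterlim f eventually eventually) by (intros; apply eventually_subseq; auto).
  assert (I23 : forall n, (phi2 (phi3 n) < phi2 (phi3 (S n)))%nat).
  { intros n. specialize (Hi3 n). 
    assert (forall a b, (a < b)%nat -> (phi2 a < phi2 b)%nat).
    { intros a b Hab. pose proof (incr_mono phi2 Hi2 (S a) b Hab). specialize (Hi2 a). lia. }
    auto. }
  assert (I123 : forall n, (phi1 (phi2 (phi3 n)) < phi1 (phi2 (phi3 (S n))))%nat).
  { intros n. specialize (I23 n).
    assert (forall a b, (a < b)%nat -> (phi1 a < phi1 b)%nat).
    { intros a b Hab. pose proof (incr_mono phi1 Hi1 (S a) b Hab). specialize (Hi1 a). lia. }
    auto. }
  pose (psi := fun n => phi1 (phi2 (phi3 n))).
  assert (Lt : is_lim_seq (fun n => fst (fst (p (psi n)))) t0).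
  { apply (is_lim_seq_subseq (fun n => fst (fst (p (phi1 n)))) t0 (fun n => phi2 (phi3 n))); auto. }
  assert (Lx : is_lim_seq (fun n => snd (fst (p (psi n)))) x0).
  { apply (is_lim_seq_subseq (fun n => snd (fst (p (phi1 (phi2 n))))) x0 phi3); auto. }
  assert (Lg : is_lim_seq (fun n => g (fst (fst (p (psi n)))) (snd (fst (p (psi n)))) (snd (p (psi n)))) (g t0 x0 y0)).
  { apply Hc; auto. intros n; apply Hp. }
  assert (Llow : is_lim_seq (fun n => Sg - / (INR (psi n) + 1)) Sg).
  { apply (is_lim_seq_subseq (fun n => Sg - / (INR n + 1)) Sg psi). apply Hinc; exact I123.
    replace (Finite Sg) with (Rbar_minus Sg 0) by (simpl; f_equal; ring).
    apply is_lim_seq_minus'. apply is_lim_seq_const. apply inv_n_lim. }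
  assert (HSg : Sg <= g t0 x0 y0).
  { assert (H := is_lim_seq_le _ _ _ _ (fun n => Rlt_le _ _ (proj2 (Hp (psi n)))) Llow Lg).
    exact H. }
  intros t x y Hbox. apply Rle_trans with Sg; auto.
  apply HS1. exists t, x, y. auto.
Qed.

Lemma left_max_deriv (f : R -> R) s l eta : 0 < eta -> is_derive f s l ->
  (forall t, s - eta < t < s -> f t <= f s) -> 0 <= l.
Proof.
  intros Heta Hd Hm. apply is_derive_Reals in Hd.
  apply Rnot_lt_le. intro Hl.
  destruct (Hd (- l / 2)) as [d Hdl]; [lra|].
  pose (h := - Rmin (d / 2) (eta / 2)).
  assert (Hh1 : h < 0) by (unfold h; apply Rmin_case; pose proof (cond_pos d); lra).
  assert (Hh2 : Rabs h < d).
  { rewrite Rabs_left by lra. unfold h. rewrite Ropp_involutive. eapply Rle_lt_trans; [apply Rmin_l|]. pose proof (cond_pos d); lra. }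
  specialize (Hdl h (Rlt_not_eq _ _ Hh1) Hh2).
  assert (Hh3 : - eta < h) by (unfold h; pose proof (Rmin_r (d/2) (eta/2)); lra).
  specialize (Hm (s + h) ltac:(lra)).
  apply Rabs_def2 in Hdl. destruct Hdl as [Hdl _].
  assert (Hq : (f (s + h) - f s) / h < l / 2) by lra.
  assert (Hq2 : 0 <= (f (s + h) - f s) / h).
  { unfold Rdiv. replace ((f (s + h) - f s) * / h) with ((f s - f (s + h)) * / (- h)) by (field; lra).
    apply Rmult_le_pos; [lra|]. left; apply Rinv_0_lt_compat; lra. }
  lra.
Qed.

Lemma right_max_deriv (f : R -> R) s l eta : 0 < eta -> is_derive f s l ->
  (forall t, s < t < s + eta -> f t <= f s) -> l <= 0.
Proof.
  intros Heta Hd Hm.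
  assert (Hd' : is_derive (fun t => f (- t)) (- s) (- l)).
  { assert (H1 : is_derive (fun t : R => - t) (- s) (-1)) by (auto_derive; [auto| ring]).
    assert (H2 : is_derive f (- - s) l) by (rewrite Ropp_involutive; exact Hd).
    pose proof (is_derive_comp f (fun t => -t) (-s) l (-1) H2 H1) as H3.
    replace (-l) with (scal (-1) l) by (unfold scal; simpl; unfold mult; simpl; ring).
    exact H3. }
  assert (0 <= - l).
  { apply (left_max_deriv _ (- s) (- l) eta Heta Hd'). intros t Ht.
    rewrite Ropp_involutive. apply Hm. lra. }
  lra.
Qed.

Lemma second_deriv_max (f q q' : R -> R) q2 x0 :
  (forall x, ex_derive f x) -> ex_derive (Derive f) x0 ->
  (forall x, is_derive q x (q' x)) -> is_derive q' x0 q2 ->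
  (forall x, f x - q x <= f x0 - q x0) ->
  Derive (Derive f) x0 <= q2.
Proof.
  intros Hf Hf2 Hq Hq2 Hmax.
  assert (HF : forall x, is_derive (fun y => f y - q y) x (Derive f x - q' x)).
  { intros x. apply (is_derive_minus f q). apply Derive_correct. apply Hf. apply Hq. }
  assert (HF0 : Derive f x0 - q' x0 = 0).
  { apply Rle_antisym.
    - apply (right_max_deriv _ x0 _ 1 Rlt_0_1 (HF x0)). intros; apply Hmax.
    - apply (left_max_deriv _ x0 _ 1 Rlt_0_1 (HF x0)). intros; apply Hmax. }
  apply Rnot_lt_le. intro HL.
  set (L := Derive (Derive f) x0 - q2).
  assert (HdF : is_derive (fun y => Derive f y - q' y) x0 L).
  { apply (is_derive_minus (Derive f) q'). apply Derive_correct. exact Hf2. exact Hq2. }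
  apply is_derive_Reals in HdF.
  destruct (HdF (L / 2)) as [d Hd]; [unfold L; lra|].
  assert (Hpos : forall h, 0 < h < d -> 0 < Derive f (x0 + h) - q' (x0 + h)).
  { intros h Hh. specialize (Hd h ltac:(lra) ltac:(rewrite Rabs_pos_eq; lra)).
    rewrite HF0 in Hd. apply Rabs_def2 in Hd. destruct Hd as [_ Hd].
    assert (0 < (Derive f (x0 + h) - q' (x0 + h) - 0) / h) by (unfold L in *; lra).
    unfold Rdiv in H. rewrite Rminus_0_r in H.
    apply (Rmult_lt_reg_r (/ h)). apply Rinv_0_lt_compat; lra. lra. }
  pose proof (cond_pos d) as Hdpos.
  destruct (MVT_cor2 (fun y => f y - q y) (fun y => Derive f y - q' y) x0 (x0 + d / 2))
    as [c [Hc1 Hc2]]; [lra| |].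
  { intros c Hc. apply is_derive_Reals. apply HF. }
  specialize (Hpos (c - x0) ltac:(lra)). replace (x0 + (c - x0)) with c in Hpos by ring.
  specialize (Hmax (x0 + d / 2)).
  assert (0 < (Derive f c - q' c) * (x0 + d / 2 - x0)) by (apply Rmult_lt_0_compat; lra).
  lra.
Qed.

Lemma seq_cont (u : R -> R -> R -> R) t x y :
  filterlim (fun p : R * R * R => u (fst (fst p)) (snd (fst p)) (snd p))
       (within (fun p : R * R * R => 0 <= fst (fst p)) (locally (t, x, y)))
       (locally (u t x y)) ->
  forall tn xn yn : nat -> R, (forall n, 0 <= tn n) ->
  is_lim_seq tn t -> is_lim_seq xn x -> is_lim_seq yn y ->
  is_lim_seq (fun n => u (tn n) (xn n) (yn n)) (u t x y).
Proof.
  intros Hc tn xn yn Hpos Ht Hx Hy.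
  unfold is_lim_seq.
  apply (filterlim_comp _ _ _ (fun n => (tn n, xn n, yn n))
          (fun p : R * R * R => u (fst (fst p)) (snd (fst p)) (snd p)) eventually
          (within (fun p : R * R * R => 0 <= fst (fst p)) (locally (t, x, y)))); [|exact Hc].
  intros P [eps HP].
  assert (Et := Ht (ball t eps) (locally_ball t eps)).
  assert (Ex := Hx (ball x eps) (locally_ball x eps)).
  assert (Ey := Hy (ball y eps) (locally_ball y eps)).
  simpl in Et, Ex, Ey.
  destruct Et as [N1 H1]. destruct Ex as [N2 H2]. destruct Ey as [N3 H3].
  exists (N1 + N2 + N3)%nat. intros n Hn.
  apply HP; [| apply Hpos].
  split; [split|]; simpl; [apply H1|apply H2|apply H3]; lia.
Qed.

Lemma mass_nonneg (f : R -> R) :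
  (forall y, 0 <= f y) -> ex_RInt_gen f (Rbar_locally m_infty) (Rbar_locally p_infty) ->
  0 <= RInt_gen f (Rbar_locally m_infty) (Rbar_locally p_infty).
Proof.
  intros Hf Hex.
  pose proof (RInt_gen_correct f Hex) as Hc.
  set (I := RInt_gen f (Rbar_locally m_infty) (Rbar_locally p_infty)) in *.
  assert (H := RInt_gen_norm (Fa := Rbar_locally m_infty) (Fb := Rbar_locally p_infty) f f I I).
  assert (Hn : norm (RInt_gen f (Rbar_locally m_infty) (Rbar_locally p_infty))
        <= RInt_gen f (Rbar_locally m_infty) (Rbar_locally p_infty)).
  { apply H; auto.
    - apply (Filter_prod _ _ _ (fun z => z < 0) (fun z => 0 < z)); [exists 0; auto| exists 0; auto|].
      intros a b Ha Hb; simpl; lra.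
    - apply (Filter_prod _ _ _ (fun z => True) (fun z => True)); [exists 0; auto| exists 0; auto|].
      intros a b _ _ z _. simpl. unfold norm; simpl. rewrite Rabs_pos_eq; [lra| apply Hf]. }
  change (Rabs I <= I) in Hn. pose proof (Rabs_pos I).
  lra.
Qed.

Lemma scale_ineq E p1 p2 c1 c2 : 0 < E -> /E * p1 - c1 <= /E * p2 - c2 -> p1 - E*c1 <= p2 - E*c2.
Proof.
  intros HE H. apply (Rmult_le_compat_l E) in H; [|lra].
  replace (E * (/ E * p1 - c1)) with (p1 - E * c1) in H by (field; lra).
  replace (E * (/ E * p2 - c2)) with (p2 - E * c2) in H by (field; lra).
  exact H.
Qed.

Lemma super_ineq A a mu0 C eps th y :
  0 < a -> a < A -> mu0 + 1 < a -> 0 <= C -> Rabs th <= C ->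
  Rabs eps < Rmin 1 ((A^2 - a^2) * (a - 1 - mu0) / (A^4 * (C + 1)^2)) ->
  0 <= A^2 * (y - eps * th)^2 - a^2 * y^2 + a - 1 - mu0.
Proof.
  intros Ha HaA Hmu HC Hth He.
  set (B := A^2 - a^2). set (D := a - 1 - mu0). set (k := eps * th).
  assert (HB : 0 < B) by (unfold B; nra).
  assert (HD : 0 < D) by (unfold D; lra).
  assert (HA4 : 0 < A^4 * (C + 1)^2) by (apply Rmult_lt_0_compat; [apply pow_lt|apply pow_lt]; lra).
  assert (He1 : Rabs eps < 1) by (eapply Rlt_le_trans; [exact He| apply Rmin_l]).
  assert (He2 : Rabs eps < B * D / (A^4 * (C + 1)^2)) by (eapply Rlt_le_trans; [exact He| apply Rmin_r]).
  assert (Hk : k^2 <= Rabs eps * C^2).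
  { unfold k. rewrite <- (pow2_abs (eps * th)). rewrite Rabs_mult.
    assert (0 <= Rabs eps) by apply Rabs_pos. assert (0 <= Rabs th) by apply Rabs_pos.
    assert (Rabs eps * Rabs eps <= Rabs eps) by nra.
    assert (Rabs th * Rabs th <= C * C) by nra.
    simpl. nra. }
  assert (Hk2 : A^4 * k^2 < B * D).
  { apply (Rmult_lt_compat_r (A^4 * (C + 1)^2)) in He2; [|exact HA4].
    unfold Rdiv in He2. rewrite Rmult_assoc, Rinv_l in He2 by lra. rewrite Rmult_1_r in He2.
    assert (A^4 * k^2 <= A^4 * (Rabs eps * C^2)) by (apply Rmult_le_compat_l; [apply pow_le; lra| exact Hk]).
    assert (0 <= Rabs eps) by apply Rabs_pos.
    assert (A^4 * (Rabs eps * C^2) <= Rabs eps * (A^4 * (C + 1)^2)).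
    { assert (C^2 <= (C+1)^2) by nra. assert (0 <= A^4) by (apply pow_le; lra). nra. }
    lra. }
  assert (Hid : B * (A^2 * (y - k)^2 - a^2 * y^2 + D) = (B*y - A^2*k)^2 + B * A^2 * k^2 + (B * D - A^4 * k^2)).
  { unfold B. ring. }
  assert (0 <= B * (A^2 * (y - k)^2 - a^2 * y^2 + D)).
  { rewrite Hid. assert (0 <= B * A^2 * k^2) by (apply Rmult_le_pos; [apply Rmult_le_pos; [lra| apply pow2_ge_0]| apply pow2_ge_0]).
    pose proof (pow2_ge_0 (B*y - A^2*k)). lra. }
  assert (0 <= A^2 * (y - k)^2 - a^2 * y^2 + D).
  { apply Rnot_lt_le. intro Hc. assert (B * (A^2 * (y - k)^2 - a^2 * y^2 + D) < 0) by nra. lra. }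
  unfold D in *. lra.
Qed.

Lemma cont_helper (f : R -> R) z : (forall z, ex_derive f z) -> continuity_pt f z.
Proof. intros H. apply continuity_pt_filterlim. exact (ex_derive_continuous (K:=R_AbsRing) (V:=R_NormedModule) f z (H z)). Qed.

Lemma lim_fun (f : R -> R) (un : nat -> R) (l : R) : (forall z, ex_derive f z) -> is_lim_seq un l ->
  is_lim_seq (fun n => f (un n)) (f l).
Proof. intros H Hu. apply is_lim_seq_continuous; [apply cont_helper; exact H| exact Hu]. Qed.

Theorem mainTheorem1 :
  forall (A mu0 a : R) (theta : R -> R),
    0 < A -> 0 < A - 1 ->
    0 < mu0 -> mu0 < A - 1 ->
    mu0 + 1 < a -> a < (A - 1) + 1 ->
    Cb theta ->
    exists eps0 : R, 0 < eps0 /\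
      forall eps : R, Rabs eps < eps0 ->
      forall (u0 : R -> R -> R) (u : R -> R -> R -> R) (M : R),
        M_of a u0 = Finite M ->
        is_global_nonneg_solution A eps theta u0 u ->
        forall t x y, 0 <= t ->
          0 <= u t x y /\
          u t x y <= M * exp (- mu0 * t) * exp (- (a * y ^ 2 / 2)).
Proof.
  intros A mu0 a theta HA HA1 Hm0 Hm1 Ha1 Ha2 [Hthc [C HC]].
  assert (HC0 : 0 <= C) by (specialize (HC 0); pose proof (Rabs_pos (theta 0)); lra).
  exists (Rmin 1 ((A^2 - a^2) * (a - 1 - mu0) / (A^4 * (C + 1)^2))). split.
  { apply Rmin_case; [lra|]. apply Rdiv_lt_0_compat.
    - apply Rmult_lt_0_compat; [|lra]. assert (0 < a) by lra. nra.
    - apply Rmult_lt_0_compat; apply pow_lt; lra. }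
  intros eps Heps u0 u M HM Hsol.
  destruct Hsol as [Hcont [Hreg [Hint [Heq [Hinit [Hnn Hbd]]]]]].
  assert (HMb : forall x y, u0 x y * exp (a * y^2/2) <= M).
  { intros x y. pose proof (Lub_Rbar_correct (fun z => exists x y, z = u0 x y * exp (a*y^2/2))) as [Hub _].
    unfold M_of in HM. rewrite HM in Hub. apply (Hub _). exists x, y; reflexivity. }
  assert (HM0 : 0 <= M).
  { specialize (HMb 0 0). rewrite <- Hinit in HMb. pose proof (Hnn 0 0 0 (Rle_refl 0)).
    pose proof (exp_pos (a*0^2/2)). nra. }
  set (w := fun t y => M * exp (- mu0 * t) * exp (- (a * y ^ 2 / 2))).
  assert (Hw0 : forall t y, 0 <= w t y).
  { intros. unfold w. pose proof (exp_pos (- mu0 * t)). pose proof (exp_pos (- (a * y ^ 2 / 2))).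
    apply Rmult_le_pos; [apply Rmult_le_pos|]; lra. }
  assert (Hinit_b : forall x y, u 0 x y <= w 0 y).
  { intros x y. unfold w. rewrite Hinit. replace (-mu0*0) with 0 by ring. rewrite exp_0, Rmult_1_r.
    specialize (HMb x y). pose proof (exp_pos (a * y^2/2)).
    replace (u0 x y) with (u0 x y * exp (a*y^2/2) * / exp (a*y^2/2)) by (field; lra).
    rewrite exp_Ropp. apply Rmult_le_compat_r; [left; apply Rinv_0_lt_compat; lra| exact HMb]. }
  intros t x y Ht. split; [apply Hnn; exact Ht|].
  change (u t x y <= w t y).
  destruct (Req_dec t 0) as [-> | Htne]; [apply Hinit_b|].
  assert (HT : 0 < t) by lra.
  apply Rnot_lt_le. intro Hcon.
  destruct (Hbd t Ht) as [CT HCT].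
  assert (HCT0 : 0 <= CT) by (specialize (HCT 0 0 0 ltac:(lra)); pose proof (Rabs_pos (u 0 0 0)); lra).
  assert (HuCT : forall s x' y', 0 <= s <= t -> u s x' y' <= CT).
  { intros. eapply Rle_trans; [apply Rle_abs| apply HCT; auto]. }
  assert (HE0 : 0 < exp (-2 * t)) by apply exp_pos.
  set (V1 := exp (-2 * t) * (u t x y - w t y)).
  assert (HV1 : 0 < V1) by (unfold V1; apply Rmult_lt_0_compat; lra).
  assert (Hden : 0 < 2 * (1 + x^2 + y^2 + 5*t)) by (pose proof (pow2_ge_0 x); pose proof (pow2_ge_0 y); lra).
  set (del := V1 / (2 * (1 + x^2 + y^2 + 5*t))).
  assert (Hdel : 0 < del) by (unfold del; apply Rdiv_lt_0_compat; lra).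
  set (g := fun s x y => exp (-2 * s) * (u s x y - w s y) - del * (1 + x^2 + y^2 + 5*s)).
  assert (Hg1 : 0 < g t x y).
  { unfold g. fold V1. unfold del. 
    replace (V1 / (2 * (1 + x ^ 2 + y ^ 2 + 5 * t)) * (1 + x ^ 2 + y ^ 2 + 5 * t)) with (V1 / 2) by (field; lra).
    lra. }
  assert (Hgub : forall s x' y', 0 <= s <= t -> g s x' y' <= CT - del * (1 + x'^2 + y'^2)).
  { intros s x' y' Hs. unfold g.
    assert (Hes : exp (-2 * s) <= 1).
    { destruct (Req_dec s 0) as [->|]. replace (-2*0) with 0 by ring. rewrite exp_0; lra. left; rewrite <- exp_0; apply exp_increasing; lra. }
    pose proof (exp_pos (-2 * s)). pose proof (HuCT s x' y' Hs). pose proof (Hw0 s y').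
    pose proof (Hnn s x' y' (proj1 Hs)).
    assert (exp (-2 * s) * (u s x' y' - w s y') <= CT).
    { destruct (Rle_dec 0 (u s x' y' - w s y')).
      - assert (exp (-2 * s) * (u s x' y' - w s y') <= 1 * (u s x' y' - w s y')) by (apply Rmult_le_compat_r; lra). lra.
      - assert (exp (-2 * s) * (u s x' y' - w s y') <= 0) by nra. lra. }
    assert (0 <= del * (5 * s)) by (apply Rmult_le_pos; lra).
    lra. }
  set (L := Rabs x + Rabs y + CT / del + 1).
  assert (HCTd : 0 <= CT / del) by (apply Rdiv_le_0_compat; lra).
  assert (Hsq : forall z, L < Rabs z -> CT < del * z^2).
  { intros z Hz. pose proof (Rabs_pos x). pose proof (Rabs_pos y).
    assert (H1 : 1 <= Rabs z) by (unfold L in Hz; lra).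
    assert (H2 : CT / del < Rabs z) by (unfold L in Hz; lra).
    assert (H3 : Rabs z <= z^2) by (rewrite <- pow2_abs; nra).
    assert (CT < del * Rabs z).
    { apply (Rmult_lt_compat_l del) in H2; [|lra]. unfold Rdiv in H2.
      replace (del * (CT * / del)) with CT in H2 by (field; lra). exact H2. }
    nra. }
  assert (Hout : forall s x' y', 0 <= s <= t -> ~ (-L <= x' <= L /\ -L <= y' <= L) -> g s x' y' < 0).
  { intros s x' y' Hs Hn. pose proof (Hgub s x' y' Hs).
    pose proof (pow2_ge_0 x'). pose proof (pow2_ge_0 y').
    destruct (Rle_dec (Rabs x') L) as [Hx|Hx].
    - destruct (Rle_dec (Rabs y') L) as [Hy|Hy].
      + exfalso. apply Hn. split; apply Rabs_le_between; auto.
      + pose proof (Hsq y' ltac:(lra)). nra.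
    - pose proof (Hsq x' ltac:(lra)). nra. }
  assert (HL : 0 <= L) by (unfold L; pose proof (Rabs_pos x); pose proof (Rabs_pos y); lra).
  destruct (EVT3 g t L ltac:(lra) HL) as [s [x0 [y0 [Hbox Hmax]]]].
  { exists CT. intros s x' y' [Hs _]. pose proof (Hgub s x' y' Hs).
    assert (0 <= del * (1 + x'^2 + y'^2)) by (pose proof (pow2_ge_0 x'); pose proof (pow2_ge_0 y'); apply Rmult_le_pos; lra).
    lra. }
  { intros tn xn yn t' x' y' Hb Hb' Htn Hxn Hyn. unfold g, w.
    apply is_lim_seq_minus'.
    - apply is_lim_seq_mult'.
      + apply (lim_fun (fun s => exp (-2 * s))); auto. intros; auto_derive; auto.
      + apply is_lim_seq_minus'.
        * apply (seq_cont u t' x' y'); auto. apply Hcont. apply Hb'. intros n; apply Hb.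
        * apply is_lim_seq_mult'.
          -- apply (lim_fun (fun s => M * exp (- mu0 * s))); auto. intros; auto_derive; auto.
          -- apply (lim_fun (fun s => exp (- (a * s ^ 2 / 2)))); auto. intros; auto_derive; auto.
    - apply is_lim_seq_mult'. apply is_lim_seq_const.
      apply is_lim_seq_plus'; [apply is_lim_seq_plus'; [apply is_lim_seq_plus'|]|].
      + apply is_lim_seq_const.
      + apply (lim_fun (fun s => s^2)); auto. intros; auto_derive; auto.
      + apply (lim_fun (fun s => s^2)); auto. intros; auto_derive; auto.
      + apply (lim_fun (fun s => 5 * s)); auto. intros; auto_derive; auto. }
  assert (Hin1 : inbox t L t x y).
  { unfold inbox. pose proof (Rabs_pos x). pose proof (Rabs_pos y).
    split; [lra|]. split; apply Rabs_le_between; unfold L; lra. }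
  assert (Hgpos : 0 < g s x0 y0) by (pose proof (Hmax t x y Hin1); lra).
  assert (Hglob : forall s' x' y', 0 <= s' <= t -> g s' x' y' <= g s x0 y0).
  { intros s' x' y' Hs'. destruct (classic (-L <= x' <= L /\ -L <= y' <= L)) as [Hb|Hb].
    - apply Hmax. unfold inbox. tauto.
    - pose proof (Hout s' x' y' Hs' Hb). lra. }
  destruct Hbox as [Hs [Hx0 Hy0]].
  assert (Hspos : 0 < s).
  { destruct (Req_dec s 0) as [Hs0|]; [|lra]. exfalso. rewrite Hs0 in Hgpos. unfold g in Hgpos.
    replace (-2 * 0) with 0 in Hgpos by ring. rewrite exp_0 in Hgpos.
    pose proof (Hinit_b x0 y0). pose proof (pow2_ge_0 x0). pose proof (pow2_ge_0 y0).
    assert (0 < del * (1 + x0 ^ 2 + y0 ^ 2 + 5 * 0)) by (apply Rmult_lt_0_compat; lra). lra. }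
  set (Es := exp (2 * s)).
  assert (HEs : 0 < Es) by apply exp_pos.
  assert (HEe : exp (-2 * s) = / Es).
  { unfold Es. rewrite <- exp_Ropp. f_equal. ring. }
  assert (Hst : 0 <= s <= t) by lra.
  destruct (Hreg s x0 y0 Hspos) as [Rt [Rx1 [Rx2 [Ry1 Ry2]]]].
  assert (Hx2 : d2x u s x0 y0 <= 2 * Es * del).
  { unfold d2x.
    apply (second_deriv_max (fun x'' => u s x'' y0) (fun z => Es * del * z^2) (fun z => 2 * Es * del * z) (2*Es*del) x0).
    - exact Rx1.
    - exact Rx2.
    - intros z; auto_derive; auto; ring.
    - auto_derive; auto; ring.
    - intros z. pose proof (Hglob s z y0 Hst) as H. unfold g in H. rewrite HEe in H.
      apply scale_ineq in H; [|exact HEs]. lra. }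
  assert (Hy2 : d2y u s x0 y0 <= w s y0 * (a^2 * y0^2 - a) + 2 * Es * del).
  { unfold d2y.
    apply (second_deriv_max (fun y'' => u s x0 y'') (fun z => w s z + Es * del * z^2)
      (fun z => M * exp (- mu0 * s) * (exp (- (a * z ^ 2 / 2)) * (- (a * z))) + 2 * Es * del * z)
      (w s y0 * (a^2 * y0^2 - a) + 2 * Es * del) y0).
    - exact Ry1.
    - exact Ry2.
    - intros z; unfold w; auto_derive; auto. replace (a * (z * (z * 1)) * / 2) with (a * z ^ 2 / 2) by (unfold Rdiv; ring). field.
    - unfold w; auto_derive; auto. replace (a * (y0 * (y0 * 1)) * / 2) with (a * y0 ^ 2 / 2) by (unfold Rdiv; ring). field.
    - intros z. pose proof (Hglob s x0 z Hst) as H. unfold g in H. rewrite HEe in H.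
      apply scale_ineq in H; [|exact HEs]. lra. }
  set (U := u s x0 y0). set (W := w s y0).
  assert (Htd : 0 <= -2 * exp (-2 * s) * (U - W) + exp (-2 * s) * (dt u s x0 y0 + mu0 * W) - 5 * del).
  { apply (left_max_deriv (fun r => g r x0 y0) s _ s Hspos).
    - unfold g, U, W, w, dt. auto_derive; auto. replace (a * (y0 * (y0 * 1)) / 2) with (a * y0 ^ 2 / 2) by field. ring.
    - intros r Hr. apply Hglob. lra. }
  rewrite HEe in Htd.
  pose proof (Heq s x0 y0 Hspos) as Hequ. fold U in Hequ.
  set (m := y_mass u s x0) in Hequ.
  assert (Hm : 0 <= m).
  { unfold m, y_mass. apply mass_nonneg. intros; apply Hnn; lra. apply Hint; lra. }
  assert (HU : 0 <= U) by (apply Hnn; lra).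
  assert (HW : 0 <= W) by apply Hw0.
  assert (Hsup := super_ineq A a mu0 C eps (theta x0) y0 ltac:(lra) ltac:(lra) Ha1 HC0 (HC x0) Heps).
  set (Q := 1 - A ^ 2 * (y0 - eps * theta x0) ^ 2) in *.
  set (K := A ^ 2 * (y0 - eps * theta x0) ^ 2 - a ^ 2 * y0 ^ 2 + a - 1 - mu0) in Hsup.
  assert (HQ : Q <= 1) by (unfold Q; pose proof (pow2_ge_0 (y0 - eps * theta x0)); pose proof (pow2_ge_0 A); nra).
  assert (HUW : 0 < / Es * (U - W)).
  { unfold g in Hgpos. rewrite HEe in Hgpos. fold U W in Hgpos.
    pose proof (pow2_ge_0 x0). pose proof (pow2_ge_0 y0).
    assert (0 < del * (1 + x0 ^ 2 + y0 ^ 2 + 5 * s)) by (apply Rmult_lt_0_compat; lra). lra. }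
  assert (HiE : 0 < / Es) by (apply Rinv_0_lt_compat; lra).
  assert (HUW' : 0 < U - W).
  { apply Rnot_le_lt. intro Hc. assert (/ Es * (U - W) <= 0) by nra. lra. }
  assert (HW2 : W * (a ^ 2 * y0 ^ 2 - a) + mu0 * W = - W * Q - W * K).
  { unfold Q, K. ring. }
  assert (HWK : 0 <= W * K) by (apply Rmult_le_pos; lra).
  assert (HUmq : U * (Q - m) <= U * Q) by nra.
  assert (HQUW : Q * (U - W) <= U - W) by nra.
  assert (Hsum : dt u s x0 y0 + mu0 * W <= 4 * Es * del + (U - W)).
  { rewrite Hequ. fold Q. fold W in Hy2. lra. }
  assert (Hfin : / Es * (dt u s x0 y0 + mu0 * W) <= 4 * del + / Es * (U - W)).
  { apply (Rmult_le_compat_l (/ Es)) in Hsum; [|lra].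
    replace (/ Es * (4 * Es * del + (U - W))) with (4 * del + / Es * (U - W)) in Hsum by (field; lra).
    exact Hsum. }
  lra.
Qed.
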